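(* Let $\Omega$ be a nonempty set and $\succeq$ a regular stochastic order on $\mathfrak F(\Omega)$. Then $\succeq$ is induced by an ideal of subsets of $\Omega$ if and only if there exists a weak$^*$ compact set $\mathbb P_\succeq\subset\mathbb P$ such that $\sup\{\mu(A):\mu\in\mathbb P_\succeq\}\in\{0,1\}$ for all $A\subset\Omega$ and, for all $f,g\in\mathfrak F(\Omega)$, $$f\succeq g\quad\text{if and only if}\quad\inf_{\mu\in\mathbb P_\succeq}\int(f-g)\,d\mu\ge0 .$$
   Context: $\mathfrak F(\Omega)$ is the set of real-valued functions on $\Omega$; inequalities between functions are pointwise and constants are identified with constant functions. A regular stochastic order is a reflexive, transitive binary relation $\succeq$ on $\mathfrak F(\Omega)$ such that: (TRIV) $0\not\succeq 1$; (CONE) $f_i\succeq g_i$ and $a_i\ge0$ for $i=1,2$ imply $a_1f_1+a_2f_2\succeq a_1g_1+a_2g_2$; (CERT) $f\ge0$ implies $f\succeq0$; (APPR) if $f+2^{-n}\succeq0$ for all $n\in\mathbb N$ then $f\succeq0$; (REST) $f\succeq0$ and $A\subset\Omega$ imply $f1_A\succeq0$. The order $\succeq$ is induced by an ideal if there is a family $\mathcal N$ of subsets of $\Omega$, closed under finite unions and under taking subsets, with $\Omega\notin\mathcal N$, such that $f\succeq g$ iff $\{f-g\le-\eta\}\in\mathcal N$ for every $\eta>0$. $ba$ denotes the bounded finitely additive real set functions on all subsets of $\Omega$, $\mathbb P$ the finitely additive probabilities in $ba$; the weak$^*$ topology on $ba$ is the one induced by duality with bounded functions, $\langle m,f\rangle=\int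 f\,dm$. For $\mu\in ba$ and $f\in\mathfrak F(\Omega)$, $\int f\,d\mu:=\lim_n\int[(f^+\wedge n)-(f^-\wedge n)]\,d\mu$ if this limit exists in $[-\infty,\infty]$, and $\int f\,d\mu:=\infty$ otherwise. *)

(* Defs.v *)
From HB Require Import structures.
From mathcomp Require Import all_boot all_order all_algebra.
From mathcomp Require Import all_classical all_reals all_analysis.
Set Implicit Arguments. Unset Strict Implicit. Unset Printing Implicit Defensive.
Import Order.TTheory GRing.Theory Num.Theory.
Local Open Scope classical_set_scope.
Local Open Scope ring_scope.

Section Defs.
Variables (T : Type) (R : realType).

Definition indic (A : set T) : T -> R := fun x => if `[< A x >] then 1 else 0.

Definition regular_stochastic_order (ge : (T -> R) -> (T -> R) -> Prop) : Prop :=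
  (forall f, ge f f) /\
  (forall f g h, ge f g -> ge g h -> ge f h) /\
  ~ ge (fun=> 0) (fun=> 1) /\
  (forall f1 f2 g1 g2 (a1 a2 : R), ge f1 g1 -> ge f2 g2 ->
                0 <= a1 -> 0 <= a2 ->
                ge (fun x => a1 * f1 x + a2 * f2 x) (fun x => a1 * g1 x + a2 * g2 x)) /\
  (forall f, (forall x, 0 <= f x) -> ge f (fun=> 0)) /\
  (forall f, (forall n : nat, ge (fun x => f x + 2%:R ^- n) (fun=> 0)) ->
                ge f (fun=> 0)) /\
  (forall f (A : set T), ge f (fun=> 0) ->
                ge (fun x => f x * indic A x) (fun=> 0)).

Definition induced_by_ideal (ge : (T -> R) -> (T -> R) -> Prop) : Prop :=
  exists N : set (set T),
    [/\ (forall A B, N A -> N B -> N (A `|` B)),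
        (forall A B, N A -> B `<=` A -> N B),
        ~ N setT &
        (forall f g, ge f g <->
           (forall eta : R, 0 < eta -> N [set x | f x - g x <= - eta]))].

Definition is_fprob (m : set T -> R) : Prop :=
  [/\ m setT = 1,
      (forall A, 0 <= m A) &
      (forall A B, A `&` B = set0 -> m (A `|` B) = m A + m B)].

Definition bounded_fun (f : T -> R) : Prop := exists M : R, forall x, `|f x| <= M.

Definition simple_eval (s : seq (R * set T)) (x : T) : R :=
  \sum_(p <- s) p.1 * indic p.2 x.
Definition simple_int (m : set T -> R) (s : seq (R * set T)) : R :=
  \sum_(p <- s) p.1 * m p.2.

Definition int_bdd (m : set T -> R) (f : T -> R) : R :=
  sup [set simple_int m s | s in [set s | forall x, simple_eval s x <= f x]].

Definition trunc (n : nat) (f : T -> R) : T -> R :=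
  fun x => Num.min (Num.max (f x) 0) n%:R - Num.min (Num.max (- f x) 0) n%:R.

(** the extended integral of the paper: the limit of the truncated integrals
    if it exists in [-oo,+oo], and +oo otherwise *)
Definition int_ext (m : set T -> R) (f : T -> R) : \bar R :=
  let u := fun n : nat => ((int_bdd m (trunc n f))%:E : \bar R) in
  if `[< cvgn u >] then limn u else +oo%E.

(** weak* topology on P (subspace topology from ba, i.e. the coarsest topology
    making m |-> \int f dm continuous for every bounded f) *)
Definition wstar_open (U : set (set T -> R)) : Prop :=
  forall mu, U mu -> exists (fs : seq (T -> R)) (eps : R),
    [/\ all (fun f => `[< bounded_fun f >]) fs, 0 < eps &
        forall nu, is_fprob nu ->
          all (fun f => `|int_bdd nu f - int_bdd mu f| < eps) fs -> U nu].

Definition wstar_compact (K : set (set T -> R)) : Prop :=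
  forall Us : set (set (set T -> R)),
    (forall U, Us U -> wstar_open U) -> K `<=` \bigcup_(U in Us) U ->
    exists l : seq (set (set T -> R)),
      all (fun U => `[< Us U >]) l /\
      K `<=` (fun mu => has (fun U => `[< U mu >]) l).

End Defs.

(* Main.v *)
Require Import Defs.
From mathcomp Require Import all_boot all_order all_algebra.
From mathcomp Require Import all_classical all_reals all_analysis.
From mathcomp Require Import lra.
Require Import Defs.
Import Order.TTheory GRing.Theory Num.Theory.
Set Implicit Arguments. Unset Strict Implicit.
Local Open Scope classical_set_scope.
Local Open Scope ring_scope.

Section Meas.
Variables (T : Type) (R : realType) (m : set T -> R).
Hypothesis fp : is_fprob m.

Lemma m_split X Y : m X = m (X `&` Y) + m (X `&` ~` Y).
Proof.
case: fp => _ _ add.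
rewrite -add; last first.
  by apply/seteqP; split => x //= [[_ ?] [_ ?]].
congr m; apply/seteqP; split => x /=; last by case=> -[].
by move=> Xx; case: (pselect (Y x)) => ?; [left|right].
Qed.

Lemma m0 : m set0 = 0.
Proof. have := m_split set0 set0. rewrite !set0I. lra. Qed.

Lemma m_ge0 X : 0 <= m X.
Proof. by case: fp. Qed.

Lemma m_mono X Y : X `<=` Y -> m X <= m Y.
Proof.
move=> XY; rewrite (m_split Y X).
have -> : Y `&` X = X by apply/seteqP; split => x /= => [[]|?]//; split=> //; apply XY.
have := m_ge0 (Y `&` ~` X); lra.
Qed.

Lemma m_le1 X : m X <= 1.
Proof. case: fp => <- _ _; apply: m_mono. by []. Qed.

Lemma m_compl1 A : m A = 1 -> m (~` A) = 0.
Proof.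
move=> h; have := m_split setT A; rewrite !setTI h; case: fp => -> _ _; lra.
Qed.

Lemma m_compl0 A : m A = 0 -> m (~` A) = 1.
Proof.
move=> h; have := m_split setT A; rewrite !setTI h; case: fp => -> _ _; lra.
Qed.

Lemma m_null A X : m A = 0 -> m (X `&` A) = 0.
Proof.
move=> h; apply/le_anti; rewrite m_ge0 andbT -h; apply: m_mono => x [].
by [].
Qed.

Lemma m_union A B : m (A `|` B) <= m A + m B.
Proof.
rewrite (m_split (A `|` B) A).
have -> : (A `|` B) `&` A = A by apply/seteqP; split => x /= => [[]|?]//; split=> //; left.
have : m ((A `|` B) `&` ~` A) <= m B by apply: m_mono => x [[]].
lra.
Qed.

Lemma eval_cons (p : R * set T) s (x : T) : simple_eval (p :: s) x = p.1 * indic R p.2 x + simple_eval s x.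
Proof. by rewrite /simple_eval big_cons. Qed.
Lemma eval_nil (x : T) : simple_eval (T:=T) (R:=R) [::] x = 0.
Proof. by rewrite /simple_eval big_nil. Qed.
Lemma sint_cons (p : R * set T) s : simple_int m (p :: s) = p.1 * m p.2 + simple_int m s.
Proof. by rewrite /simple_int big_cons. Qed.
Lemma sint_nil : simple_int m [::] = 0.
Proof. by rewrite /simple_int big_nil. Qed.

Lemma indic1 (A : set T) x : A x -> indic R A x = 1.
Proof. by move=> Ax; rewrite /indic asboolT. Qed.
Lemma indic0 (A : set T) x : ~ A x -> indic R A x = 0.
Proof. by move=> Ax; rewrite /indic asboolF. Qed.

Lemma key s C c : (forall x, C x -> simple_eval s x <= c) ->
  \sum_(p <- s) p.1 * m (p.2 `&` C) <= c * m C.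
Proof.
elim: s C c => [|[a B] s IH] C c h.
  rewrite big_nil; have [[x Cx]|C0] := pselect (C !=set0).
    have := h x Cx; rewrite eval_nil => c0.
    by apply: mulr_ge0 => //; apply: m_ge0.
  have -> : C = set0 by apply/seteqP; split => x // Cx; apply: C0; exists x.
  by rewrite m0 mulr0.
rewrite big_cons /=.
have h1 := IH (C `&` B) (c - a).
have h2 := IH (C `&` ~` B) c.
have e : \sum_(p <- s) p.1 * m (p.2 `&` C) =
  \sum_(p <- s) p.1 * m (p.2 `&` (C `&` B)) + \sum_(p <- s) p.1 * m (p.2 `&` (C `&` ~` B)).
  rewrite -big_split /=; apply: eq_bigr => p _.
  by rewrite -mulrDr (m_split _ B) !setIA.
rewrite e (m_split C B) (setIC B C).
have H1 : \sum_(p <- s) p.1 * m (p.2 `&` (C `&` B)) <= (c - a) * m (C `&` B).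
  apply: h1 => x [Cx Bx]; have := h x Cx; rewrite eval_cons indic1 //=; lra.
have H2 : \sum_(p <- s) p.1 * m (p.2 `&` (C `&` ~` B)) <= c * m (C `&` ~` B).
  apply: h2 => x [Cx Bx]; have := h x Cx; rewrite eval_cons indic0 //=; lra.
lra.
Qed.

Lemma sint_split s C : simple_int m s =
  \sum_(p <- s) p.1 * m (p.2 `&` C) + \sum_(p <- s) p.1 * m (p.2 `&` ~` C).
Proof. by rewrite /simple_int -big_split /=; apply: eq_bigr => p _; rewrite -mulrDr -m_split. Qed.

Lemma simple_le s A c : m A = 1 -> (forall x, A x -> simple_eval s x <= c) ->
  simple_int m s <= c.
Proof.
move=> mA h; rewrite (sint_split s A).
have -> : \sum_(p <- s) p.1 * m (p.2 `&` ~` A) = 0.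
  by rewrite big1 // => p _; rewrite m_null ?mulr0 // m_compl1.
have := @key s A c h; rewrite mA; lra.
Qed.


Lemma simple_bdd_ne (f : T -> R) M : (forall x, - M <= f x) ->
  [set simple_int m s | s in [set s | forall x, simple_eval s x <= f x]] !=set0.
Proof.
move=> h; exists (simple_int m [:: (- M, setT)]), [:: (- M, setT)] => //= x.
by rewrite eval_cons eval_nil indic1 //= mulr1 addr0.
Qed.

Lemma simple_bdd_ub (f : T -> R) M : (forall x, f x <= M) ->
  has_ubound [set simple_int m s | s in [set s | forall x, simple_eval s x <= f x]].
Proof.
move=> h; exists M => _ [s /= hs <-]; apply: (@simple_le s setT).
  by case: fp.
by move=> x _; apply: le_trans (hs x) (h x).
Qed.

Lemma int_ub (f : T -> R) A c M : m A = 1 -> (forall x, A x -> f x <= c) ->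
  (forall x, - M <= f x) -> int_bdd m f <= c.
Proof.
move=> mA hc hM; apply: ge_sup; first exact: simple_bdd_ne hM.
move=> _ [s /= hs <-]; apply: (@simple_le s A c mA) => x Ax.
exact: le_trans (hs x) (hc x Ax).
Qed.

Lemma int_lb (f : T -> R) A c M : m A = 1 -> (forall x, A x -> c <= f x) ->
  (forall x, - M <= f x) -> (forall x, f x <= M) -> c <= int_bdd m f.
Proof.
move=> mA hc hM hM'; apply: ub_le_sup; first exact: simple_bdd_ub hM'.
exists [:: (- M, setT); (c + M, A)].
  move=> x /=; rewrite !eval_cons eval_nil indic1 //=.
  case: (pselect (A x)) => Ax.
    rewrite indic1 //; have := hc x Ax; lra.
  rewrite indic0 //; have := hM x; lra.
rewrite !sint_cons sint_nil /= mA; case: fp => -> _ _; lra.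
Qed.

Lemma int_mono (f g : T -> R) A M : m A = 1 -> (forall x, A x -> f x <= g x) ->
  (forall x, - M <= f x) -> (forall x, f x <= M) ->
  (forall x, - M <= g x) -> (forall x, g x <= M) ->
  int_bdd m f <= int_bdd m g.
Proof.
move=> mA hfg hf1 hf2 hg1 hg2; apply: ge_sup; first exact: simple_bdd_ne hf1.
move=> _ [s /= hs <-].
have -> : simple_int m s = simple_int m ((- (2 * M), ~` A) :: s).
  by rewrite sint_cons /= m_compl1 // mulr0 add0r.
apply: ub_le_sup; first exact: simple_bdd_ub hg2.
exists ((- (2 * M), ~` A) :: s) => // x /=; rewrite eval_cons /=.
case: (pselect (A x)) => Ax.
  rewrite indic0; last by [].
  have := hs x; have := hfg x Ax; lra.
rewrite indic1 //; have := hs x; have := hf2 x; have := hg1 x; lra.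
Qed.

Lemma int_indic A : int_bdd m (indic R A) = m A.
Proof.
have b0 x : 0 <= indic R A x by rewrite /indic; case: asboolP.
have b1 x : indic R A x <= 1 by rewrite /indic; case: asboolP.
have b2 x : ~ A x -> indic R A x <= 0 by move=> Ax; rewrite indic0.
apply/le_anti/andP; split.
  apply: ge_sup.
    apply: (@simple_bdd_ne _ 0) => x; rewrite oppr0; exact: b0.
  move=> _ [s /= hs <-]; rewrite (sint_split s A).
  have h1 := @key s A 1 (fun x Ax => le_trans (hs x) (b1 x)).
  have h2 := @key s (~` A) 0 (fun x Ax => le_trans (hs x) (b2 x Ax)).
  lra.
apply: ub_le_sup; first exact: (@simple_bdd_ub _ 1).
exists [:: (1, A)]; last by rewrite sint_cons sint_nil /= mul1r addr0.
by move=> x /=; rewrite eval_cons eval_nil /= mul1r addr0.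
Qed.

End Meas.

Lemma maxE {R : realType} (a b : R) : a <= Num.max a b /\ b <= Num.max a b /\ (Num.max a b = a \/ Num.max a b = b).
Proof. case: (ltP a b) => h; do ?split; try lra; first [by left | by right]. Qed.
Lemma minE {R : realType} (a b : R) : Num.min a b <= a /\ Num.min a b <= b /\ (Num.min a b = a \/ Num.min a b = b).
Proof. case: (ltP a b) => h; do ?split; try lra; first [by left | by right]. Qed.

Section Trunc.
Variables (T : Type) (R : realType).

Lemma trunc_bd (n : nat) (f : T -> R) x : - n%:R <= trunc n f x /\ trunc n f x <= n%:R.
Proof.
rewrite /trunc; have := ler0n R n; move: (f x) (n%:R : R) => a N h.
split; case: (maxE a 0) => [p1 [p2 p3]]; case: (maxE (-a) 0) => [q1 [q2 q3]];
  move: (Num.max a 0) (Num.max (-a) 0) p1 p2 p3 q1 q2 q3 => p q p1 p2 p3 q1 q2 q3;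
  case: (minE p N) => [r1 [r2 r3]]; case: (minE q N) => [s1 [s2 s3]];
  move: (Num.min p N) (Num.min q N) r1 r2 r3 s1 s2 s3 => r s r1 r2 r3 s1 s2 s3;
  case: p3 => ?; case: q3 => ?; case: r3 => ?; case: s3 => ?; subst; lra.
Qed.

Lemma trunc_lb (n : nat) (f : T -> R) x (e : R) : 0 < e -> - e < f x -> - e <= trunc n f x.
Proof.
rewrite /trunc; have := ler0n R n; move: (f x) (n%:R : R) => a N h.
case: (maxE a 0) => [p1 [p2 p3]]; case: (maxE (-a) 0) => [q1 [q2 q3]];
  move: (Num.max a 0) (Num.max (-a) 0) p1 p2 p3 q1 q2 q3 => p q p1 p2 p3 q1 q2 q3;
  case: (minE p N) => [r1 [r2 r3]]; case: (minE q N) => [s1 [s2 s3]];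
  move: (Num.min p N) (Num.min q N) r1 r2 r3 s1 s2 s3 => r s r1 r2 r3 s1 s2 s3;
  case: p3 => ?; case: q3 => ?; case: r3 => ?; case: s3 => ?; subst; lra.
Qed.

Lemma trunc_ub (n : nat) (f : T -> R) x (e : R) : e <= n%:R -> f x <= - e -> trunc n f x <= - e.
Proof.
rewrite /trunc; have := ler0n R n; move: (f x) (n%:R : R) => a N h.
case: (maxE a 0) => [p1 [p2 p3]]; case: (maxE (-a) 0) => [q1 [q2 q3]];
  move: (Num.max a 0) (Num.max (-a) 0) p1 p2 p3 q1 q2 q3 => p q p1 p2 p3 q1 q2 q3;
  case: (minE p N) => [r1 [r2 r3]]; case: (minE q N) => [s1 [s2 s3]];
  move: (Num.min p N) (Num.min q N) r1 r2 r3 s1 s2 s3 => r s r1 r2 r3 s1 s2 s3;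
  case: p3 => ?; case: q3 => ?; case: r3 => ?; case: s3 => ?; subst; lra.
Qed.

Lemma trunc_mono (n k : nat) (f : T -> R) x : (n <= k)%N -> f x <= 0 -> trunc k f x <= trunc n f x.
Proof.
move=> nk; have : n%:R <= k%:R :> R by rewrite ler_nat.
rewrite /trunc; have := ler0n R n; move: (f x) (n%:R : R) (k%:R : R) => a N K h1 h2 h3.
case: (maxE a 0) => [p1 [p2 p3]]; case: (maxE (-a) 0) => [q1 [q2 q3]].
move: (Num.max a 0) (Num.max (-a) 0) p1 p2 p3 q1 q2 q3 => p q p1 p2 p3 q1 q2 q3.
case: (minE p N) => [r1 [r2 r3]]; case: (minE q N) => [s1 [s2 s3]].
case: (minE p K) => [t1 [t2 t3]]; case: (minE q K) => [u1 [u2 u3]].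
move: (Num.min p N) (Num.min q N) (Num.min p K) (Num.min q K) r1 r2 r3 s1 s2 s3 t1 t2 t3 u1 u2 u3.
move=> r s t u r1 r2 r3 s1 s2 s3 t1 t2 t3 u1 u2 u3.
case: p3 => ?; case: q3 => ?; case: r3 => ?; case: s3 => ?; case: t3 => ?; case: u3 => ?; subst; lra.
Qed.

End Trunc.

Section Ext.
Variables (T : Type) (R : realType) (m : set T -> R).
Hypothesis fp : is_fprob m.

Lemma ext_lb (h : T -> R) : (forall e : R, 0 < e -> m [set x | h x <= - e] = 0) ->
  (0 <= int_ext m h)%E.
Proof.
move=> H.
have K e : 0 < e -> ((- e)%:E <= int_ext m h)%E.
  move=> e0; rewrite /int_ext; case: asboolP => cv; last exact: leey.
  apply: lime_ge => //; apply: nearW => n; rewrite lee_fin.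
  apply: (int_lb (A := ~` [set x | h x <= - e]) (M := n%:R) fp).
  - by apply: m_compl0 => //; apply: H.
  - move=> x /= hx; apply: trunc_lb => //; rewrite ltNge; apply/negP => hh; exact: hx.
  - by move=> x; case: (trunc_bd n h x).
  - by move=> x; case: (trunc_bd n h x).
case E : (int_ext m h) => [r| |] //.
  rewrite lee_fin leNgt; apply/negP => r0.
  have h1 : 0 < - r / 2 by lra.
  have := K _ h1; rewrite E lee_fin; lra.
have := K _ ltr01; rewrite E; by [].
Qed.

Lemma ext_ub (h : T -> R) e : 0 < e -> m [set x | h x <= - e] = 1 ->
  (int_ext m h <= (- e)%:E)%E.
Proof.
move=> e0 mA.
set A := [set x | h x <= - e].
have hom : {homo (fun n : nat => (int_bdd m (trunc n h))%:E) : n k / (n <= k)%N >-> (k <= n)%E}.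
  move=> n k nk; rewrite lee_fin.
  have nk' : n%:R <= k%:R :> R by rewrite ler_nat.
  apply: (int_mono (A := A) (M := k%:R) fp) => //.
  - move=> x Ax; apply: trunc_mono => //; rewrite /A /= in Ax; lra.
  - by move=> x; case: (trunc_bd k h x).
  - by move=> x; case: (trunc_bd k h x).
  - by move=> x; case: (trunc_bd n h x) => ? ?; lra.
  - by move=> x; case: (trunc_bd n h x) => ? ?; lra.
have cv := ereal_nonincreasing_is_cvgn hom.
rewrite /int_ext asboolT //.
set N := (Num.Def.trunc e).+1.
have eN : e <= N%:R by apply/ltW; exact: truncnS_gt.
apply: lime_le => //; exists N => // k /= Nk.
apply: le_trans (hom _ _ Nk) _; rewrite lee_fin.
apply: (int_ub (A := A) (M := N%:R) fp) => //.
- by move=> x Ax; apply: trunc_ub.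
- by move=> x; case: (trunc_bd N h x).
Qed.

End Ext.

Section Ultra.
Variables (T : Type) (R : realType).

Definition dG (G : set (set T)) : set T -> R := fun A => if `[< G A >] then 1 else 0.

Lemma uI (G : set (set T)) (UG : UltraFilter G) A B : G A -> G B -> G (A `&` B).
Proof. exact: (@filterI _ G (@filter_filter _ _ (@ultra_proper _ _ UG))). Qed.
Lemma uS (G : set (set T)) (UG : UltraFilter G) A B : A `<=` B -> G A -> G B.
Proof. exact: (@filterS _ G (@filter_filter _ _ (@ultra_proper _ _ UG))). Qed.
Lemma uT (G : set (set T)) (UG : UltraFilter G) : G setT.
Proof. exact: (@filterT _ G (@filter_filter _ _ (@ultra_proper _ _ UG))). Qed.
Lemma uE (G : set (set T)) (UG : UltraFilter G) : ~ G set0.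
Proof. exact: (@filter_not_empty _ G (@ultra_proper _ _ UG)). Qed.

Lemma u_notboth (G : set (set T)) (UG : UltraFilter G) A : G A -> G (~` A) -> False.
Proof.
move=> h1 h2; have := uI UG h1 h2; rewrite setICr; exact: uE.
Qed.

Lemma u_union (G : set (set T)) (UG : UltraFilter G) A B : G (A `|` B) -> G A \/ G B.
Proof.
move=> h; case: (in_ultra_setVsetC A UG) => hA; first by left.
case: (in_ultra_setVsetC B UG) => hB; first by right.
exfalso; apply: (u_notboth UG h); have := uI UG hA hB.
by apply: uS => x [? ?] [].
Qed.

Lemma dG1 (G : set (set T)) A : G A -> dG G A = 1.
Proof. by move=> h; rewrite /dG asboolT. Qed.
Lemma dG0 (G : set (set T)) A : ~ G A -> dG G A = 0.
Proof. by move=> h; rewrite /dG asboolF. Qed.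

Lemma dG_fprob (G : set (set T)) (UG : UltraFilter G) : is_fprob (dG G).
Proof.
split.
- by apply: dG1; apply: uT.
- by move=> A; rewrite /dG; case: asboolP.
- move=> A B AB0; rewrite /dG.
  have nb : ~ (G A /\ G B) by move=> [hA hB]; have := uI UG hA hB; rewrite AB0; exact: uE.
  have u1 : G (A `|` B) <-> G A \/ G B.
    split; first exact: u_union.
    case=> h; [apply: (uS UG (A:=A) (B:=A `|` B) _ h) | apply: (uS UG (A:=B) (B:=A `|` B) _ h)] => x; by [left|right].
  case: asboolP => h1; case: asboolP => h2; case: asboolP => h3; first [lra | exfalso; tauto].
Qed.

Definition bigI (l : seq (set T)) : set T := foldr setI setT l.
Definition allPs (P : set (set T)) (l : seq (set T)) : Prop := foldr (fun B acc => P B /\ acc) True l.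

Lemma bigI_cat l1 l2 x : bigI (l1 ++ l2) x <-> bigI l1 x /\ bigI l2 x.
Proof.
elim: l1 => [|B l IH] /=; first by split => // -[].
rewrite /bigI /= -/(bigI (l ++ l2)) -/(bigI l).
split; first by move=> [Bx /IH [? ?]].
by move=> [[Bx lx] l2x]; split => //; apply/IH.
Qed.

Lemma allP_cat P l1 l2 : allPs P l1 -> allPs P l2 -> allPs P (l1 ++ l2).
Proof. by elim: l1 => [|B l IH] //= [PB Pl] P2; split => //; apply: IH. Qed.

Lemma exists_ultra (N P : set (set T)) : N set0 -> (forall A B, N A -> N B -> N (A `|` B)) ->
  (forall l Z, allPs P l -> N Z -> exists x, bigI l x /\ ~ Z x) ->
  exists G, UltraFilter G /\ (forall B, P B -> G B) /\ (forall Z, N Z -> ~ G Z).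
Proof.
move=> N0 NU H.
set F := [set X | exists l Z, [/\ allPs P l, N Z & forall x, bigI l x -> ~ Z x -> X x]].
have PF : ProperFilter F.
  split.
  - move=> [l [Z [Pl NZ h]]]; have [x [lx Zx]] := H l Z Pl NZ; exact: h x lx Zx.
  - split.
    + by exists [::], set0; split.
    + move=> X Y [l1 [Z1 [P1 N1 h1]]] [l2 [Z2 [P2 N2 h2]]].
      exists (l1 ++ l2), (Z1 `|` Z2); split; [exact: allP_cat|exact: NU|].
      move=> x /bigI_cat [x1 x2] nZ; split; [apply: h1|apply: h2] => // ?; apply: nZ; by [left|right].
    + move=> X Y XY [l [Z [Pl NZ h]]]; exists l, Z; split => // x lx Zx; apply: XY; exact: h.
have [G [UG FG]] := ultraFilterLemma PF.
exists G; split => //; split.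
- move=> B PB; apply: FG; exists [:: B], set0; split => //.
  by move=> x [].
- move=> Z NZ GZ; have : G (~` Z) by apply: FG; exists [::], Z; split.
  move=> GnZ; exact (u_notboth UG GZ GnZ).
Qed.

End Ultra.

Lemma backward (T : Type) (R : realType) (ge : (T -> R) -> (T -> R) -> Prop)
  (K : set (set T -> R)) :
  K `<=` @is_fprob T R -> wstar_compact K ->
  (forall A : set T,
            ereal_sup [set (mu A)%:E | mu in K] = 0%E \/
            ereal_sup [set (mu A)%:E | mu in K] = 1%E) ->
  (forall f g : T -> R,
            ge f g <->
            (0 <= ereal_inf [set int_ext mu (fun x => (f x - g x)%R) | mu in K])%E) ->
  induced_by_ideal ge.
Proof.
move=> hK hcomp hsup hchar.
set N := [set A : set T | forall mu, K mu -> mu A = 0].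
have Kne : exists mu, K mu.
  apply: contrapT => nK.
  have e : ereal_sup [set (mu setT)%:E | mu in K] = -oo%E.
    apply/le_anti/andP; split; last exact: leNye.
    apply: ge_ereal_sup => y [mu Kmu _]; exfalso; apply: nK; by exists mu.
  by case: (hsup setT); rewrite e.
have attain : forall A, ~ N A -> exists2 mu, K mu & mu A = 1.
  move=> A nNA.
  have s1 : ereal_sup [set (mu A)%:E | mu in K] = 1%E.
    case: (hsup A) => // s0; exfalso; apply: nNA => mu Kmu.
    have fmu := hK mu Kmu.
    apply/le_anti/andP; split; last exact: m_ge0.
    have := @ereal_sup_ubound R [set (mu A)%:E | mu in K] (mu A)%:E.
    rewrite s0 lee_fin; apply; by exists mu.
  apply: contrapT => nex.
  have lt1 : forall mu, K mu -> mu A < 1.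
    move=> mu Kmu; rewrite lt_neqAle (m_le1 (hK mu Kmu)) andbT; apply/eqP => e.
    by apply: nex; exists mu.
  set Us := [set U : set (set T -> R) | exists c : R, c < 1 /\ U = [set nu | is_fprob nu /\ nu A < c]].
  have Uopen : forall U, Us U -> wstar_open U.
    move=> U [c [c1 ->]] mu [fmu muc].
    exists [:: indic R A], (c - mu A); split.
    - rewrite /= andbT; apply/asboolP; exists 1 => x; rewrite /indic.
      by case: asboolP => _; rewrite ?normr1 ?normr0.
    - by rewrite subr_gt0.
    - move=> nu fnu; rewrite /= andbT !int_indic // => hlt; split => //.
      have := ler_norm (nu A - mu A); lra.
  have Ucov : K `<=` \bigcup_(U in Us) U.
    move=> mu Kmu; exists [set nu | is_fprob nu /\ nu A < (mu A + 1) / 2].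
      exists ((mu A + 1) / 2); split => //; have := lt1 _ Kmu; lra.
    split; first exact: hK; have := lt1 _ Kmu; lra.
  have [l [lU lK]] := hcomp Us Uopen Ucov.
  have [c [c1 hc]] : exists c : R, c < 1 /\ forall mu, has (fun U => `[< U mu >]) l -> mu A < c.
    elim: l lU {lK} => [|U l IH] /=; first by move=> _; exists 0; split.
    move=> /andP [/asboolP [c [c1 ->]] /IH [c' [c'1 hc']]].
    case: (maxE c c') => [m1 [m2 m3]].
    exists (Num.max c c'); split; first by case: m3 => ->.
    move=> mu /orP [/asboolP [_ h] | /hc' h]; lra.
  have : (ereal_sup [set (mu A)%:E | mu in K] <= c%:E)%E.
    apply: ge_ereal_sup => _ [mu Kmu <-]; rewrite lee_fin; apply/ltW/hc/lK.
    exact: Kmu.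
  rewrite s1 lee_fin; lra.
exists N; split.
- move=> A B hA hB mu Kmu; have fmu := hK mu Kmu.
  apply/le_anti/andP; split; last exact: m_ge0.
  have := m_union fmu A B; rewrite hA // hB //; lra.
- move=> A B hA BA mu Kmu; have fmu := hK mu Kmu.
  apply/le_anti/andP; split; last exact: m_ge0.
  rewrite -(hA mu Kmu); exact: m_mono fmu _ _ BA.
- case: Kne => mu Kmu /(_ mu Kmu); case: (hK mu Kmu) => -> _ _ /eqP; by rewrite oner_eq0.
- move=> f g; rewrite hchar; split.
  + move=> h0 e e0; apply: contrapT => nN.
    have [mu Kmu mu1] := attain _ nN.
    have h1 := ext_ub (hK mu Kmu) e0 mu1.
    have h2 : (ereal_inf [set int_ext mu0 (fun x => (f x - g x)%R) | mu0 in K] <=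
               int_ext mu (fun x => (f x - g x)%R))%E.
      by apply: ereal_inf_lbound; exists mu.
    have := le_trans h0 (le_trans h2 h1); rewrite lee_fin; lra.
  + move=> hN; apply: le_ereal_inf_tmp => _ [mu Kmu <-].
    apply: (ext_lb (hK mu Kmu)) => e e0; exact: hN e e0 mu Kmu.
Qed.

Lemma nbhd (T : Type) (R : realType) (G : set (set T)) (UG : UltraFilter G) (eps : R) :
  0 < eps -> forall fs : seq (T -> R), all (fun f => `[< bounded_fun f >]) fs ->
  exists B, G B /\ forall H, UltraFilter H -> H B ->
    all (fun f => `|int_bdd (@dG T R H) f - int_bdd (@dG T R G) f| < eps) fs.
Proof.
move=> e0; elim => [|f fs IH] /=.
  move=> _; exists setT; split => //; exact: uT.
move=> /andP [/asboolP [M hM] /IH [B' [GB' hB']]].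
have hM1 x : - M <= f x by have := hM x; rewrite ler_norml => /andP [].
have hM2 x : f x <= M by have := hM x; rewrite ler_norml => /andP [].
set L := int_bdd (dG R G) f.
set P := [set x | `|f x - L| < eps / 2].
have fpG := dG_fprob R UG.
have GP : G P.
  apply: contrapT => nP.
  have : G ([set x | L + eps / 2 <= f x] `|` [set x | f x <= L - eps / 2]).
    case: (in_ultra_setVsetC P UG) => // hc; apply: (uS UG _ hc) => x /= nx.
    have : ~~ (- (eps / 2) < f x - L < eps / 2) by rewrite -ltr_norml; apply/negP.
    rewrite negb_and -!leNgt => /orP [h|h]; [right|left]; lra.
  case/(u_union UG) => hG.
    have := int_lb (A := [set x | L + eps / 2 <= f x]) fpG (c := L + eps / 2) (dG1 R hG) (fun x h => h) hM1 hM2.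
    rewrite -/L; lra.
  have := int_ub (A := [set x | f x <= L - eps / 2]) fpG (c := L - eps / 2) (dG1 R hG) (fun x h => h) hM1.
  rewrite -/L; lra.
exists (P `&` B'); split; first exact: uI.
move=> H UH HB; apply/andP; split; last first.
  by apply: hB' => //; apply: (uS UH _ HB) => x [].
have HP : H P by apply: (uS UH _ HB) => x [].
have fpH := dG_fprob R UH.
have hP1 x : P x -> L - eps / 2 <= f x by rewrite /P /= ltr_norml => /andP [? ?]; lra.
have hP2 x : P x -> f x <= L + eps / 2 by rewrite /P /= ltr_norml => /andP [? ?]; lra.
have l1 := int_lb (A := P) fpH (c := L - eps / 2) (dG1 R HP) hP1 hM1 hM2.
have l2 := int_ub (A := P) fpH (c := L + eps / 2) (dG1 R HP) hP2 hM1.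
rewrite -/L ltr_norml; apply/andP; split; lra.
Qed.

Lemma bigI_allP (T : Type) (A : set T) l : allPs [set B | B = A] l -> A `<=` bigI l.
Proof.
elim: l => [|B l IH] /=; first by [].
by move=> [-> /IH h] x Ax; split => //; apply: h.
Qed.

Lemma forward (T : Type) (R : realType) (ge : (T -> R) -> (T -> R) -> Prop) :
  regular_stochastic_order ge -> induced_by_ideal ge ->
   exists K : set (set T -> R),
     [/\ K `<=` @is_fprob T R,
         wstar_compact K,
         (forall A : set T,
            ereal_sup [set (mu A)%:E | mu in K] = 0%E \/
            ereal_sup [set (mu A)%:E | mu in K] = 1%E) &
         (forall f g : T -> R,
            ge f g <->
            (0 <= ereal_inf [set int_ext mu (fun x => (f x - g x)%R) | mu in K])%E)].
Proof.
move=> [refl _] [N [NU NS NT hN]].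
have N0 : N set0.
  have := (hN (fun=> 0) (fun=> 0)).1 (refl _) 1 ltr01.
  by move=> h; apply: (NS _ set0 h).
set valid := fun G : set (set T) => UltraFilter G /\ (forall Z, N Z -> ~ G Z).
set K := [set mu : set T -> R | exists G, valid G /\ mu = @dG T R G].
have ultra_ex : forall A, ~ N A -> exists G, valid G /\ G A.
  move=> A nA.
  have hyp : forall l Z, allPs [set B | B = A] l -> N Z -> exists x, bigI l x /\ ~ Z x.
    move=> l Z Pl NZ.
    apply: contrapT => nx; apply: nA; apply: (NS Z) => // x Ax.
    apply: contrapT => Zx; apply: nx; exists x; split => //; exact: bigI_allP Pl x Ax.
  have [G [UG [PG avG]]] := exists_ultra N0 NU hyp.
  by exists G; split => //; apply: PG.
have Kf : K `<=` @is_fprob T R by move=> mu [G [[UG _] ->]]; exact: dG_fprob.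
exists K; split => //.
-
  move=> Us hopen hcov.
  set Good := fun B : set T => exists U, Us U /\ forall H, valid H -> H B -> U (@dG T R H).
  have claim1 : forall G, valid G -> exists B, Good B /\ G B.
    move=> G [UG av].
    have KG : K (@dG T R G) by exists G.
    have [U UsU UG'] := hcov _ KG.
    have [fs [eps [fsb e0 hU]]] := hopen U UsU _ UG'.
    have [B [GB hB]] := nbhd UG e0 fsb.
    exists B; split => //; exists U; split => // H [UH avH] HB.
    apply: hU; first exact: dG_fprob.
    exact: hB.
  apply: contrapT => nfin.
  set P := [set X : set T | exists B, Good B /\ X = ~` B].
  have listcov : forall l, allPs P l -> exists lu : seq (set (set T -> R)),
      all (fun U => `[< Us U >]) lu /\
      forall H, valid H -> H (~` bigI l) -> has (fun U => `[< U (@dG T R H) >]) lu.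
    elim => [|X l IH] /=.
      move=> _; exists [::]; split => // H [UH _].
      by rewrite setCT => /(uE UH).
    move=> [[B [[U [UsU hUB]] ->]] /IH [lu [lu1 lu2]]].
    exists (U :: lu); split; first by rewrite /= lu1 andbT; apply/asboolP.
    move=> H vH hH; rewrite /=.
    have : H (B `|` ~` bigI l).
      apply: (uS (proj1 vH) _ hH) => x /= nx.
      by case: (pselect (B x)) => Bx; [left | right => lx; apply: nx; split].
    move=> h0; case: (u_union (proj1 vH) h0) => h.
      by apply/orP; left; apply/asboolP; apply: hUB.
    by apply/orP; right; apply: lu2.
  have hyp : forall l Z, allPs P l -> N Z -> exists x, bigI l x /\ ~ Z x.
    move=> l Z Pl NZ; apply: contrapT => nx.
    have [lu [lu1 lu2]] := listcov l Pl.
    apply: nfin; exists lu; split => // mu [G [vG ->]].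
    apply: lu2 => //.
    case: (in_ultra_setVsetC Z (proj1 vG)) => hZ; first by exfalso; exact: (proj2 vG) Z NZ hZ.
    apply: (uS (proj1 vG) _ hZ) => x nZ lx; apply: nZ.
    by apply: contrapT => nZx; apply: nx; exists x.
  have [W [UW [PW avW]]] := exists_ultra N0 NU hyp.
  have [B [[U [UsU hUB]] WB]] := claim1 W (conj UW avW).
  have : W (~` B) by apply: PW; exists B; split => //; exists U.
  move=> WnB; exact (u_notboth UW WB WnB).
-
  have [G0 [vG0 _]] := ultra_ex setT NT.
  move=> A; case: (pselect (N A)) => NA.
    left; apply/le_anti/andP; split.
      apply: ge_ereal_sup => _ [mu [G [[UG av] ->]] <-].
      by rewrite dG0 //; apply: av.
    apply: ereal_sup_ubound; exists (@dG T R G0); first by exists G0.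
    by rewrite dG0 //; apply: (proj2 vG0).
  right; have [G [vG GA]] := ultra_ex A NA.
  apply/le_anti/andP; split.
    apply: ge_ereal_sup => _ [mu [G' [[UG av] ->]] <-].
    by rewrite lee_fin /dG; case: asboolP.
  apply: ereal_sup_ubound; exists (@dG T R G); first by exists G.
  by rewrite dG1.
-
  move=> f g; rewrite hN; split.
  + move=> he; apply: le_ereal_inf_tmp => _ [mu [G [[UG av] ->]] <-].
    apply: (ext_lb (dG_fprob R UG)) => e e0.
    by apply: dG0; apply: av; apply: he.
  + move=> h0 e e0; apply: contrapT => nN.
    have [G [[UG av] GA]] := ultra_ex _ nN.
    have h1 := ext_ub (dG_fprob R UG) e0 (dG1 R GA).
    have h2 : (ereal_inf [set int_ext mu0 (fun x => (f x - g x)%R) | mu0 in K] <=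
               int_ext (@dG T R G) (fun x => (f x - g x)%R))%E.
      by apply: ereal_inf_lbound; exists (@dG T R G) => //; exists G.
    have := le_trans h0 (le_trans h2 h1); rewrite lee_fin; lra.
Qed.

Unset Implicit Arguments. Set Strict Implicit.

Theorem lemma2 (T : Type) (R : realType) (w : T)
    (ge : (T -> R) -> (T -> R) -> Prop) :
  regular_stochastic_order ge ->
  (induced_by_ideal ge <->
   exists K : set (set T -> R),
     [/\ K `<=` @is_fprob T R,
         wstar_compact K,
         (forall A : set T,
            ereal_sup [set (mu A)%:E | mu in K] = 0%E \/
            ereal_sup [set (mu A)%:E | mu in K] = 1%E) &
         (forall f g : T -> R,
            ge f g <->
            (0 <= ereal_inf [set int_ext mu (fun x => (f x - g x)%R) | mu in K])%E)]).
Proof.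
move=> hreg; split; first exact: forward.
by case=> K [h1 h2 h3 h4]; exact: backward h1 h2 h3 h4.
Qed.
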